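(* Let $\gamma\in(1,3)$, $\mu\in(0,1)$, $K>0$, and $U_C=\frac{2\mu}{\gamma+1}$. Define $U^{\mathrm{sp}}=U^{\mathrm{sp}}(y)$ for $0<y<\infty$ by the implicit formula \[ y=K\frac{\big(\frac{2\mu}{\gamma+1}-U^{\mathrm{sp}}\big)^{\frac1\mu-1}}{(-U^{\mathrm{sp}})^{\frac1\mu}},\qquad 0<y<\infty,\ U^{\mathrm{sp}}<0. \] Then $U^{\mathrm{sp}}$ solves \[ y\frac{dU}{dy}=-\frac{[(\gamma+1)U-2\mu]U}{(\gamma+1)U-2}, \] satisfies $-\infty<U^{\mathrm{sp}}<0$ and $\lim_{y\to\infty}U^{\mathrm{sp}}(y)=0$. Moreover, \[ U^{\mathrm{sp}}(y)=-K^\mu U_C^{1-\mu}\frac{1}{y^\mu}+o\Big(\frac1{y^\mu}\Big)\ \text{ as }y\to\infty,\qquad U^{\mathrm{sp}}(y)=-\frac{K}{y}+o\Big(\frac1y\Big)\ \text{ as }y\to0^+. \] *)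

(* Defs.v *)
From Stdlib Require Import Reals.
From Coquelicot Require Import Coquelicot.
Open Scope R_scope.

Definition UC (gamma mu : R) : R := 2 * mu / (gamma + 1).

Definition Fsp (gamma mu K U : R) : R :=
  K * Rpower (UC gamma mu - U) (1 / mu - 1) / Rpower (- U) (1 / mu).

Definition ode_rhs (gamma mu U : R) : R :=
  - (((gamma + 1) * U - 2 * mu) * U) / ((gamma + 1) * U - 2).

(* Main.v *)
Require Import Defs.
From Stdlib Require Import Reals Lra Ranalysis5.
From Coquelicot Require Import Coquelicot.
Open Scope R_scope.

Lemma UC_pos g m : 1 < g -> 0 < m -> 0 < UC g m.
Proof. intros; unfold UC; apply Rdiv_lt_0_compat; lra. Qed.

Lemma Rpower_div a b e : 0 < a -> 0 < b -> Rpower (a / b) e = Rpower a e / Rpower b e.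
Proof.
  intros. unfold Rpower. rewrite ln_div by lra.
  replace (e * (ln a - ln b)) with (e * ln a + - (e * ln b)) by ring.
  rewrite exp_plus, exp_Ropp. reflexivity.
Qed.

Lemma Rpower_pos a e : 0 < Rpower a e.
Proof. unfold Rpower; apply exp_pos. Qed.

Lemma Fsp_alt g m K U : 1 < g -> 0 < m -> U < 0 ->
  Fsp g m K U = K * Rpower ((UC g m - U) / (- U)) (1 / m - 1) / (- U).
Proof.
  intros. pose proof (UC_pos g m H H0).
  unfold Fsp. rewrite Rpower_div by lra.
  replace (1 / m) with ((1/m - 1) + 1) at 2 by ring.
  rewrite Rpower_plus, Rpower_1 by lra.
  pose proof (Rpower_pos (-U) (1/m - 1)).
  field. split; lra.
Qed.

Lemma Fsp_pos g m K U : 1 < g -> 0 < m -> 0 < K -> U < 0 -> 0 < Fsp g m K U.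
Proof.
  intros. unfold Fsp. pose proof (Rpower_pos (UC g m - U) (1/m-1)).
  pose proof (Rpower_pos (-U) (1/m)).
  apply Rdiv_lt_0_compat; [apply Rmult_lt_0_compat|]; lra.
Qed.

Lemma Fsp_incr g m K U1 U2 : 1 < g -> 0 < m -> m < 1 -> 0 < K -> U1 < U2 -> U2 < 0 ->
  Fsp g m K U1 < Fsp g m K U2.
Proof.
  intros. pose proof (UC_pos g m H H0) as Ha.
  rewrite !Fsp_alt by lra.
  assert (He : 0 < 1/m - 1).
  { assert (1 < 1/m). { apply (Rmult_lt_reg_l m); [lra|]. field_simplify; lra. } lra. }
  assert (HB : (UC g m - U1) / (- U1) < (UC g m - U2) / (- U2)).
  { apply (Rmult_lt_reg_r (-U1 * -U2)). nra. field_simplify; try lra. nra. }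
  assert (HB0 : 0 < (UC g m - U1) / (- U1)) by (apply Rdiv_lt_0_compat; lra).
  pose proof (Rlt_Rpower_l _ _ _ He (conj HB0 HB)) as HP.
  pose proof (Rpower_pos ((UC g m - U1) / (- U1)) (1/m-1)).
  unfold Rdiv at 1 3.
  apply Rlt_trans with (K * Rpower ((UC g m - U2) / - U2) (1 / m - 1) * / - U1).
  - apply Rmult_lt_compat_r. apply Rinv_0_lt_compat; lra. apply Rmult_lt_compat_l; lra.
  - apply Rmult_lt_compat_l. apply Rmult_lt_0_compat; lra.
    apply Rinv_lt_contravar; nra.
Qed.

Lemma Fsp_le g m K U1 U2 : 1 < g -> 0 < m -> m < 1 -> 0 < K -> U1 <= U2 -> U2 < 0 ->
  Fsp g m K U1 <= Fsp g m K U2.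
Proof.
  intros. destruct H3. left; apply Fsp_incr; lra. subst; lra.
Qed.
Lemma ode_neg g m U : 1 < g -> 0 < m -> m < 1 -> U < 0 -> ode_rhs g m U <> 0.
Proof.
  intros. unfold ode_rhs. 
  assert (0 < ((g + 1) * U - 2 * m) * U) by nra.
  assert ((g + 1) * U - 2 < 0) by nra.
  intro E. unfold Rdiv in E. apply Rmult_integral in E as [E|E]. lra.
  apply Rinv_neq_0_compat in E; lra.
Qed.

Lemma Fsp_deriv g m K U : 1 < g -> 0 < m -> m < 1 -> 0 < K -> U < 0 ->
  derivable_pt_lim (Fsp g m K) U (Fsp g m K U / ode_rhs g m U).
Proof.
  intros. pose proof (UC_pos g m H H0) as Ha.
  apply is_derive_Reals.
  unfold Fsp, Rpower.
  auto_derive.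
  - repeat split; try lra. apply Rgt_not_eq, exp_pos.
  - unfold ode_rhs, UC in *.
    replace (2 * m / (g + 1) + - U) with (2 * m / (g + 1) - U) by ring.
    set (E1 := exp ((1 / m - 1) * ln (2 * m / (g + 1) - U))).
    set (E2 := exp (1 / m * ln (- U))).
    assert (0 < E2) by apply exp_pos.
    assert (0 < 2 * m / (g + 1) - U) by lra.
    assert ((g + 1) * U - 2 * m < 0) by nra.
    assert ((g + 1) * U - 2 < 0) by nra.
    field. repeat split; try lra. 
Qed.

Lemma ball0 (e:posreal) x : Rabs x < e -> ball 0 e x.
Proof. intros. unfold ball; simpl; unfold AbsRing_ball, abs, minus, plus, opp; simpl. rewrite Ropp_0, Rplus_0_r. exact H. Qed.
Lemma ball0' (e:posreal) x : ball 0 e x -> Rabs x < e.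
Proof. intros. unfold ball in H; simpl in H; unfold AbsRing_ball, abs, minus, plus, opp in H; simpl in H. rewrite Ropp_0, Rplus_0_r in H. exact H. Qed.

Lemma Rpower_1_base e : Rpower 1 e = 1.
Proof. unfold Rpower. rewrite ln_1, Rmult_0_r, exp_0. reflexivity. Qed.

Lemma Fsp_cont g m K U : 1 < g -> 0 < m -> m < 1 -> 0 < K -> U < 0 ->
  continuity_pt (Fsp g m K) U.
Proof.
  intros. apply derivable_continuous_pt. exists (Fsp g m K U / ode_rhs g m U).
  apply Fsp_deriv; lra.
Qed.

Lemma Fsp_exists g m K y : 1 < g -> 0 < m -> m < 1 -> 0 < K -> 0 < y ->
  exists U, U < 0 /\ y = Fsp g m K U.
Proof.
  intros. pose proof (UC_pos g m H H0) as Ha.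
  set (e := 1/m - 1).
  assert (He : 0 < e).
  { assert (1 < 1/m). { apply (Rmult_lt_reg_l m); [lra|]. field_simplify; lra. } unfold e; lra. }
  set (M := Rpower 2 e). assert (HM : 0 < M) by apply Rpower_pos.
  set (U1 := - (UC g m + 2 * K * M / y)).
  set (U2 := - (K / (2 * y))).
  assert (HKy : 0 < K * M / y) by (apply Rdiv_lt_0_compat; nra).
  assert (HU1 : U1 < 0) by (unfold U1; lra).
  assert (HU2 : U2 < 0) by (unfold U2; assert (0 < K/(2*y)) by (apply Rdiv_lt_0_compat; lra); lra).
  assert (F1 : Fsp g m K U1 < y).
  { rewrite Fsp_alt by lra. fold e.
    assert (HB : (UC g m - U1) / - U1 <= 2).
    { unfold U1. set (V := UC g m + 2 * K * M / y). assert (0 < V) by (unfold V; lra).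
      assert (UC g m <= V) by (unfold V; lra).
      replace ((UC g m - - V) / - - V) with ((UC g m + V) / V) by (field; lra).
      apply (Rmult_le_reg_r V); [lra|]. unfold Rdiv; rewrite Rmult_assoc, Rinv_l by lra. lra. }
    assert (HB0 : 0 < (UC g m - U1) / - U1) by (apply Rdiv_lt_0_compat; lra).
    pose proof (Rle_Rpower_l _ _ e (Rlt_le _ _ He) (conj HB0 HB)) as HP. fold M in HP.
    pose proof (Rpower_pos ((UC g m - U1) / - U1) e).
    apply Rle_lt_trans with (K * M / (- U1)).
    { unfold Rdiv; apply Rmult_le_compat_r; [left; apply Rinv_0_lt_compat; lra| apply Rmult_le_compat_l; lra]. }
    apply (Rmult_lt_reg_r (- U1)); [lra|]. unfold Rdiv; rewrite Rmult_assoc, Rinv_l, Rmult_1_r by lra.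
    unfold U1. replace (y * - - (UC g m + 2 * K * M / y)) with (y * UC g m + 2 * (K * M)) by (field; lra).
    assert (0 < K * M) by (apply Rmult_lt_0_compat; lra). assert (0 < y * UC g m) by (apply Rmult_lt_0_compat; lra). lra. }
  assert (F2 : y < Fsp g m K U2).
  { rewrite Fsp_alt by lra. fold e.
    assert (HB : 1 <= (UC g m - U2) / - U2).
    { apply (Rmult_le_reg_r (- U2)). lra. field_simplify; lra. }
    pose proof (Rle_Rpower_l 1 _ e (Rlt_le _ _ He) (conj Rlt_0_1 HB)) as HP.
    rewrite Rpower_1_base in HP.
    set (P := Rpower ((UC g m - U2) / - U2) e) in *.
    unfold U2. replace (K * P / - - (K / (2 * y))) with (2 * y * P) by (field; lra).
    nra. }
  assert (U1 < U2).
  { destruct (Rlt_le_dec U1 U2) as [|Hle]; auto.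
    pose proof (Fsp_le g m K U2 U1 H H0 H1 H2 Hle HU1). lra. }
  destruct (f_interv_is_interv (Fsp g m K) U1 U2 y H4 (conj (Rlt_le _ _ F1) (Rlt_le _ _ F2)))
    as [U [HU HUe]].
  { intros. apply Fsp_cont; lra. }
  exists U. split; [lra | auto].
Qed.

Lemma Fsp_pow_mu g m K U : 1 < g -> 0 < m -> m < 1 -> 0 < K -> U < 0 ->
  Rpower (Fsp g m K U) m * (- U) = Rpower K m * Rpower (UC g m - U) (1 - m).
Proof.
  intros. pose proof (UC_pos g m H H0) as Ha.
  unfold Fsp.
  pose proof (Rpower_pos (UC g m - U) (1/m-1)).
  pose proof (Rpower_pos (- U) (1/m)).
  unfold Rdiv at 1. rewrite <- Rdiv_def.
  rewrite Rpower_div by (try apply Rmult_lt_0_compat; lra).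
  unfold Rpower at 1. rewrite ln_mult by lra. rewrite Rmult_plus_distr_l, exp_plus.
  fold (Rpower K m). fold (Rpower (Rpower (UC g m - U) (1 / m - 1)) m).
  rewrite !Rpower_mult.
  replace ((1 / m - 1) * m) with (1 - m) by (field; lra).
  replace (1 / m * m) with 1 by (field; lra).
  rewrite Rpower_1 by lra.
  field. lra.
Qed.

Theorem lemma3p6 (gamma mu K : R)
  (hg1 : 1 < gamma) (hg3 : gamma < 3) (hm0 : 0 < mu) (hm1 : mu < 1) (hK : 0 < K) :
  (forall y : R, 0 < y -> exists! U : R, U < 0 /\ y = Fsp gamma mu K U) /\
  (forall Usp : R -> R,
     (forall y : R, 0 < y -> Usp y < 0 /\ y = Fsp gamma mu K (Usp y)) ->
     (forall y : R, 0 < y ->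
        derivable_pt_lim Usp y (ode_rhs gamma mu (Usp y) / y)) /\
     (forall y : R, 0 < y -> Usp y < 0) /\
     filterlim Usp (Rbar_locally p_infty) (locally 0) /\
     filterlim
       (fun y => (Usp y + Rpower K mu * Rpower (UC gamma mu) (1 - mu) / Rpower y mu)
                 * Rpower y mu)
       (Rbar_locally p_infty) (locally 0) /\
     filterlim (fun y => (Usp y + K / y) * y) (at_right 0) (locally 0)).
Proof.
  pose proof (UC_pos gamma mu hg1 hm0) as Ha.
  set (f := Fsp gamma mu K).
  assert (Finc : forall U1 U2, U1 < U2 -> U2 < 0 -> f U1 < f U2)
    by (intros; apply Fsp_incr; lra).
  assert (Fle : forall U1 U2, U1 <= U2 -> U2 < 0 -> f U1 <= f U2)
    by (intros; apply Fsp_le; lra).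
  split.
  { intros y Hy. destruct (Fsp_exists gamma mu K y hg1 hm0 hm1 hK Hy) as [U [HU1 HU2]].
    exists U. split; [split; auto|].
    intros U' [HU'1 HU'2].
    destruct (Rtotal_order U U') as [Hl|[He|Hl]]; auto.
    - pose proof (Finc U U' Hl HU'1). fold f in HU2, HU'2. lra.
    - pose proof (Finc U' U Hl HU1). fold f in HU2, HU'2. lra. }
  intros Usp hU.
  assert (Uneg : forall y, 0 < y -> Usp y < 0) by (intros; apply hU; auto).
  assert (Ueq : forall y, 0 < y -> f (Usp y) = y) by (intros; symmetry; apply hU; auto).
  assert (Umono : forall x1 x2, 0 < x1 -> x1 <= x2 -> Usp x1 <= Usp x2).
  { intros. destruct (Rle_lt_dec (Usp x1) (Usp x2)) as [|Hl]; auto.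
    pose proof (Finc _ _ Hl (Uneg x1 H)). rewrite !Ueq in H1 by lra. lra. }
  assert (Usmono : forall x1 x2, 0 < x1 -> x1 < x2 -> Usp x1 < Usp x2).
  { intros. destruct (Rlt_le_dec (Usp x1) (Usp x2)) as [|Hl]; auto.
    pose proof (Fle _ _ Hl (Uneg x1 H)). rewrite !Ueq in H1 by lra. lra. }
  assert (Hlim : filterlim Usp (Rbar_locally p_infty) (locally 0)).
  { apply filterlim_locally. intros eps.
    exists (f (- eps)). intros x Hx. apply ball0.
    assert (0 < f (-eps)) by (apply Fsp_pos; auto; destruct eps; simpl; lra).
    pose proof (Uneg x ltac:(lra)).
    rewrite Rabs_left by lra.
    destruct (Rlt_le_dec (- eps) (Usp x)) as [|Hl]; [lra|].
    pose proof (Fle _ _ Hl ltac:(destruct eps; simpl; lra)). rewrite Ueq in H1 by lra. lra. }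
  split; [|split; [exact Uneg|split; [|split]]].
  -
    intros y Hy.
    assert (Hlu : Usp (y/2) < Usp (2*y)) by (apply Usmono; lra).
    assert (Prg : continuity_pt Usp y).
    { apply (continuity_pt_recip_interv f Usp (Usp (y/2)) (Usp (2*y)) Hlu).
      - intros. apply Finc; auto. pose proof (Uneg (2*y)); lra.
      - intros x H1 H2. rewrite Ueq in H1 by lra. rewrite Ueq in H2 by lra.
        unfold comp, id. apply Ueq; lra.
      - intros x H1 H2. rewrite Ueq in H1 by lra. rewrite Ueq in H2 by lra.
        split; apply Umono; lra.
      - intros. apply Fsp_cont; auto. pose proof (Uneg (2*y)); lra.
      - rewrite !Ueq by lra. lra. }
    assert (Prf : forall a, Usp (y/2) <= a <= Usp (2*y) -> derivable_pt f a).
    { intros a Ha'. exists (f a / ode_rhs gamma mu a). apply Fsp_deriv; auto.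
      pose proof (Uneg (2*y)); lra. }
    assert (Hinc : Usp (y/2) <= Usp y <= Usp (2*y)) by (split; apply Umono; lra).
    pose proof (derivable_pt_lim_recip_interv f Usp (y/2) (2*y) y Prf Prg ltac:(lra) ltac:(lra) Hinc) as HD.
    assert (Hd : derive_pt f (Usp y) (Prf (Usp y) Hinc) = f (Usp y) / ode_rhs gamma mu (Usp y)).
    { apply derive_pt_eq_0. apply Fsp_deriv; auto. }
    pose proof (ode_neg gamma mu (Usp y) hg1 hm0 hm1 (Uneg y Hy)) as Hode.
    rewrite Hd, Ueq in HD by auto.
    replace (ode_rhs gamma mu (Usp y) / y) with (1 / (y / ode_rhs gamma mu (Usp y))) by (field; lra).
    apply HD.
    + intros. unfold comp, id. apply Ueq; lra.
    + intro E. unfold Rdiv in E. apply Rmult_integral in E as [E|E]. lra.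
      apply Rinv_neq_0_compat in E; auto.
  - exact Hlim.
  - set (c := Rpower K mu * Rpower (UC gamma mu) (1 - mu)).
    set (gf := fun U => c - Rpower K mu * Rpower (UC gamma mu - U) (1 - mu)).
    apply filterlim_ext_loc with (f := fun y => gf (Usp y)).
    + exists 0. intros y Hy.
      pose proof (Fsp_pow_mu gamma mu K (Usp y) hg1 hm0 hm1 hK (Uneg y Hy)) as E.
      fold f in E. rewrite Ueq in E by auto.
      assert (0 < Rpower y mu) by apply Rpower_pos.
      unfold gf. rewrite <- E. field. lra.
    + apply filterlim_comp with (locally 0); [exact Hlim|].
      assert (Hc : filterlim gf (locally 0) (locally (gf 0))).
      { apply (@ex_derive_continuous R_AbsRing R_NormedModule). unfold gf, Rpower. auto_derive. lra. }
      replace (gf 0) with 0 in Hc; [exact Hc|]. unfold gf, c. rewrite Rminus_0_r. ring.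
  - set (h := fun W => K - K * Rpower (1 + UC gamma mu * W) (1 / mu - 1)).
    apply filterlim_ext_loc with (f := fun y => h (-1 / Usp y)).
    + exists (mkposreal 1 Rlt_0_1). intros y _ Hy.
      pose proof (Fsp_alt gamma mu K (Usp y) hg1 hm0 (Uneg y Hy)) as E.
      fold f in E. rewrite Ueq in E by auto.
      pose proof (Uneg y Hy).
      set (U := Usp y) in *.
      replace ((UC gamma mu - U) / - U) with (1 + UC gamma mu * (-1 / U)) in E by (field; lra).
      unfold h.
      replace ((U + K / y) * y) with (U * y + K) by (field; lra).
      rewrite E. field. lra.
    + apply filterlim_comp with (locally 0).
      * apply filterlim_locally. intros eps.
        assert (Hpe : 0 < / eps) by (apply Rinv_0_lt_compat; destruct eps; simpl; lra).
        assert (Hfp : 0 < f (- / eps)) by (apply Fsp_pos; auto; lra).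
        exists (mkposreal _ Hfp). intros y Hb Hy. apply ball0' in Hb. simpl in Hb.
        rewrite Rabs_pos_eq in Hb by lra.
        pose proof (Uneg y Hy).
        assert (Usp y < - / eps).
        { destruct (Rlt_le_dec (Usp y) (- / eps)) as [|Hl]; auto.
          pose proof (Fle _ _ Hl ltac:(lra)). rewrite Ueq in H0 by lra. lra. }
        apply ball0.
        replace (-1 / Usp y) with (/ (- Usp y)) by (field; lra).
        rewrite Rabs_pos_eq by (left; apply Rinv_0_lt_compat; lra).
        rewrite <- (Rinv_inv eps).
        apply Rinv_lt_contravar. apply Rmult_lt_0_compat; lra. lra.
      * assert (Hc : filterlim h (locally 0) (locally (h 0))).
        { apply (@ex_derive_continuous R_AbsRing R_NormedModule). unfold h, Rpower. auto_derive. lra. }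
        replace (h 0) with 0 in Hc; [exact Hc|]. unfold h.
        rewrite Rmult_0_r, Rplus_0_r, Rpower_1_base. ring.
Qed.
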